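(* Let $d=2$, $\varepsilon>0$, $\pi<q^{2+\varepsilon}$ and $L=q^{-1-\varepsilon/3}$. For $q$ small enough, \[ \nu\otimes\mu\left([L]^{2}\text{ is good}\right)\ge1-2q^{\varepsilon/3}. \]
   Context: Environment $\omega\in\{\text{susceptible},\text{immune}\}^{\mathbb{Z}^2}$ is drawn from $\nu$, the product measure with $\nu(\omega_x=\text{immune})=\pi$; given $\omega$, a configuration $\eta\in\{i,h\}^{\mathcal{S}}$ on the susceptible set $\mathcal{S}$ is drawn from $\mu$, the product measure with $\mu(\eta_x=i)=q$ ($i$ = infected, $h$ = healthy); $\nu\otimes\mu$ is the joint law. $[L]=\{1,\dots,L\}$ (with $L$ rounded to an integer). A square of the form $x+[L]^2$ is good if all its sites are susceptible and each of its rows and columns contains at least one infected site. *)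

(* Defs.v *)
From mathcomp Require Import all_boot all_order all_algebra.
From mathcomp Require Import reals exp.
Set Implicit Arguments. Unset Strict Implicit. Unset Printing Implicit Defensive.
Import Order.TTheory GRing.Theory Num.Theory.
Local Open Scope ring_scope.

(* Sites of the box [L]^2 = {1..L}^2, indexed by 'I_L * 'I_L (shift by one). *)
Definition site (L : nat) := ('I_L * 'I_L)%type.

(* Environment restricted to the box: om x = true  <->  x is immune. *)
(* Infection configuration in the box: eta x = true <-> x is infected. *)
Definition good (L : nat) (om eta : {ffun site L -> bool}) : bool :=
  [&& [forall x, ~~ om x],
      [forall i : 'I_L, [exists j : 'I_L, eta (i, j)]] &
      [forall j : 'I_L, [exists i : 'I_L, eta (i, j)]]].

(* nu (x) mu ( [L]^2 is good ): the event only depends on the sites in the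
   box, so its probability is the finite sum of the product weights of the
   box-marginals.  nu: each site immune independently with probability pi;
   mu: each (susceptible) site infected independently with probability q. *)
Definition prob_good (R : realType) (pi q : R) (L : nat) : R :=
  \sum_(om : {ffun site L -> bool}) \sum_(eta : {ffun site L -> bool})
    (\prod_(x : site L) (if om x then pi else 1 - pi)) *
    (\prod_(x : site L) (if eta x then q else 1 - q)) *
    (good om eta)%:R.

Definition Lq (R : realType) (q eps : R) : nat :=
  Num.truncn (powR q (- 1 - eps / 3)).

(* Main.v *)
Require Import Defs.
From mathcomp Require Import all_boot all_order all_algebra.
From mathcomp Require Import reals exp.
From mathcomp Require Import sequences ring lra.
Set Implicit Arguments. Unset Strict Implicit. Unset Printing Implicit Defensive.
Import Order.TTheory GRing.Theory Num.Theory.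
Local Open Scope ring_scope.

Section Comb.
Variable R : realType.
Variable L : nat.

Definition W (p : R) (f : {ffun site L -> bool}) : R :=
  \prod_(x : site L) (if f x then p else 1 - p).

Lemma sum_prod_ffun (F : site L -> bool -> R) :
  \sum_(f : {ffun site L -> bool}) \prod_x F x (f x) = \prod_x (F x true + F x false).
Proof.
rewrite -bigA_distr_bigA; apply: eq_bigr => x _.
by rewrite big_bool /= addrC.
Qed.

Lemma sum_avoid (p : R) (S : {set site L}) :
  \sum_(f : {ffun site L -> bool}) W p f * [forall x in S, ~~ f x]%:R = (1 - p) ^+ #|S|.
Proof.
pose G x (b : bool) := (if b then p else 1 - p) * (if x \in S then (~~b)%:R else 1).
have -> : \sum_(f : {ffun site L -> bool}) W p f * [forall x in S, ~~ f x]%:R =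
   \sum_(f : {ffun site L -> bool}) \prod_x G x (f x).
  apply: eq_bigr => f _; rewrite /G big_split /=; congr (_ * _).
  case: (boolP [forall x in S, ~~ f x]) => [/forall_inP H|].
    by rewrite big1 // => x _; case: ifP => // /H ->.
  rewrite negb_forall_in => /exists_inP [x xS fx].
  by rewrite (bigD1 x) //= xS (negPn fx) mul0r.
rewrite sum_prod_ffun /G.
rewrite (eq_bigr (fun x => if x \in S then 1 - p else 1)); last first.
  by move=> x _; case: ifP => _ /=; rewrite ?mulr0 ?mulr1 ?add0r // addrC subrK.
by rewrite -big_mkcond prodr_const.
Qed.

Definition RC (eta : {ffun site L -> bool}) :=
  [forall i : 'I_L, [exists j : 'I_L, eta (i, j)]] &&
  [forall j : 'I_L, [exists i : 'I_L, eta (i, j)]].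

Lemma prob_good_eq (pi q : R) : prob_good pi q L =
  (1 - pi) ^+ (L * L) * \sum_(eta : {ffun site L -> bool}) W q eta * (RC eta)%:R.
Proof.
have h : (1 - pi) ^+ (L * L) =
  \sum_(om : {ffun site L -> bool}) W pi om * [forall x in [set: site L], ~~ om x]%:R.
  by rewrite sum_avoid cardsT card_prod !card_ord.
rewrite h big_distrl; apply: eq_bigr => om _; rewrite big_distrr; apply: eq_bigr => eta _ /=.
have e : [forall x in [set: site L], ~~ om x] = [forall x, ~~ om x].
  by apply: eq_forallb => x; rewrite in_setT.
rewrite e /good /RC /W.
case: [forall x, ~~ om x]; case: ([forall i, _] && _) => /=; ring.
Qed.

Lemma W_ge0 (q : R) f : 0 <= q <= 1 -> 0 <= W q f.
Proof.
move=> /andP [q0 q1]; apply: prodr_ge0 => x _; case: (f x) => //; lra.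
Qed.

Definition Srow (i : 'I_L) : {set site L} := [set x | x.1 == i].
Definition Scol (j : 'I_L) : {set site L} := [set x | x.2 == j].

Lemma card_Srow i : #|Srow i| = L.
Proof.
have -> : Srow i = setX [set i] [set: 'I_L].
  by apply/setP => x; rewrite !inE andbT.
by rewrite cardsX cards1 cardsT card_ord mul1n.
Qed.

Lemma card_Scol j : #|Scol j| = L.
Proof.
have -> : Scol j = setX [set: 'I_L] [set j].
  by apply/setP => x; rewrite !inE.
by rewrite cardsX cards1 cardsT card_ord muln1.
Qed.

Lemma Q_ge (q : R) : 0 <= q <= 1 ->
  1 - 2 * L%:R * (1 - q) ^+ L <= \sum_(eta : {ffun site L -> bool}) W q eta * (RC eta)%:R.
Proof.
move=> hq.
have s1 : \sum_(eta : {ffun site L -> bool}) W q eta = 1.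
  have := sum_avoid q set0; rewrite cards0 expr0 => <-.
  apply: eq_bigr => eta _.
  have -> : [forall x in set0, ~~ eta x] by apply/forall_inP => x; rewrite inE.
  by rewrite mulr1.
pose Rw i (eta : {ffun site L -> bool}) := [forall x in Srow i, ~~ eta x].
pose Cl j (eta : {ffun site L -> bool}) := [forall x in Scol j, ~~ eta x].
have key : \sum_(eta : {ffun site L -> bool}) W q eta * (1 - (RC eta)%:R) <=
   \sum_(eta : {ffun site L -> bool}) W q eta *
     (\sum_i (Rw i eta)%:R + \sum_j (Cl j eta)%:R).
  apply: ler_sum => eta _; apply: ler_wpM2l; first exact: W_ge0.
  have ge0 : 0 <= \sum_i (Rw i eta)%:R + \sum_j (Cl j eta)%:R :> R.
    by apply: addr_ge0; apply: sumr_ge0 => *; apply: ler0n.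
  case: (boolP (RC eta)) => [_|]; first by rewrite subrr.
  rewrite subr0 /RC negb_and => /orP [|].
    rewrite negb_forall => /existsP [i]; rewrite negb_exists => /forallP H.
    suff : 1 <= \sum_i (Rw i eta)%:R :> R.
      have : 0 <= \sum_j (Cl j eta)%:R :> R by apply: sumr_ge0 => *; apply: ler0n.
      lra.
    rewrite (bigD1 i) //=.
    have -> : Rw i eta.
      by apply/forall_inP => [[i' j]]; rewrite inE /= => /eqP ->; exact: (H j).
    by rewrite lerDl; apply: sumr_ge0 => *; apply: ler0n.
  rewrite negb_forall => /existsP [j]; rewrite negb_exists => /forallP H.
  suff : 1 <= \sum_j (Cl j eta)%:R :> R.
    have : 0 <= \sum_i (Rw i eta)%:R :> R by apply: sumr_ge0 => *; apply: ler0n.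
    lra.
  rewrite (bigD1 j) //=.
  have -> : Cl j eta.
    by apply/forall_inP => [[i j']]; rewrite inE /= => /eqP ->; exact: (H i).
  by rewrite lerDl; apply: sumr_ge0 => *; apply: ler0n.
have e1 : \sum_(eta : {ffun site L -> bool}) W q eta * (1 - (RC eta)%:R) =
   1 - \sum_(eta : {ffun site L -> bool}) W q eta * (RC eta)%:R.
  rewrite (eq_bigr (fun eta => W q eta - W q eta * (RC eta)%:R)); first by rewrite sumrB s1.
  by move=> eta _; rewrite mulrBr mulr1.
have e2 : \sum_(eta : {ffun site L -> bool}) W q eta *
     (\sum_i (Rw i eta)%:R + \sum_j (Cl j eta)%:R) = 2 * L%:R * (1 - q) ^+ L.
  rewrite (eq_bigr (fun eta => \sum_i W q eta * (Rw i eta)%:R +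
                              \sum_j W q eta * (Cl j eta)%:R)); last first.
    by move=> eta _; rewrite mulrDr !big_distrr.
  rewrite big_split /= exchange_big [X in _ + X = _]exchange_big /=.
  rewrite (eq_bigr (fun i : 'I_L => (1 - q) ^+ L)); last first.
    by move=> i _; rewrite sum_avoid card_Srow.
  rewrite [X in _ + X = _](eq_bigr (fun i : 'I_L => (1 - q) ^+ L)); last first.
    by move=> j _; rewrite sum_avoid card_Scol.
  rewrite sumr_const card_ord -mulr_natr.
  ring.
move: key; rewrite e1 e2; lra.
Qed.
End Comb.

Section An.
Variable R : realType.

Lemma bern (p : R) n : 0 <= p <= 1 -> 1 - n%:R * p <= (1 - p) ^+ n.
Proof.
move=> /andP[p0 p1]; elim: n => [|n IH]; first by rewrite mul0r subr0 expr0.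
have h0 : 0 <= n%:R * p by apply: mulr_ge0 => //; apply: ler0n.
rewrite exprS -natr1; nra.
Qed.

Lemma P_mul (q r s : R) : 0 < q -> powR q (r + s) = powR q r * powR q s.
Proof. by move=> q0; rewrite powRD // (gt_eqF q0) implybT. Qed.

End An.

Theorem claim1 (R : realType) (eps : R) (heps : 0 < eps) :
  exists q0 : R, 0 < q0 /\
    forall q pi : R, 0 < q -> q < q0 ->
      0 <= pi -> pi < powR q (2 + eps) ->
      1 - 2 * powR q (eps / 3) <= prob_good pi q (Lq q eps).
Proof.
set a := eps / 3.
have ha : eps = 3 * a by rewrite /a; field.
have a0 : 0 < a by rewrite /a; lra.
set n := (Num.truncn (a^-1 * (1 + 3 * a))).+1.
have hn : 1 + 3 * a < a * n%:R.
  by have := truncnS_gt (a^-1 * (1 + 3 * a)); rewrite ltr_pdivrMl.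
set N : R := n%:R ^+ n.
have N0 : 0 < N by apply: exprn_gt0; apply: ltr0Sn.
set e : R := expR 1.
have e0 : 0 < e := expR_gt0 1.
set K : R := (2 * e * N)^-1.
have K0 : 0 < K by rewrite invr_gt0; apply: mulr_gt0 => //; apply: mulr_gt0.
have hK : K * (2 * e * N) = 1 by rewrite mulVf // gt_eqF //; apply: mulr_gt0 => //; apply: mulr_gt0.
exists (Num.min (1/2) (powR K a^-1)); split.
  by rewrite lt_min; apply/andP; split; [lra | apply: powR_gt0].
move=> q pi q0 qlt pi0 pilt.
move: qlt; rewrite lt_min => /andP [qh qK].
have hq1 : q <= 1 by lra.
have hq01 : 0 < q <= 1 by apply/andP.
have Pge0 s : 0 <= powR q s by apply: powR_ge0.
have Pa_K : powR q a <= K.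
  have -> : K = powR (powR K a^-1) a.
    by rewrite -powRrM mulVf ?gt_eqF // powRr1 // ltW.
  apply: (ge0_ler_powR (ltW a0)); rewrite ?nnegrE ?powR_ge0 ?(ltW q0) //; exact: ltW.
have Pa1 : powR q a <= 1.
  by rewrite -(powRr0 q); apply: ger_powR => //; exact: ltW.
rewrite /Lq -/a.
set x := powR q (-1 - a).
set L := Num.truncn x.
have hx0 : 0 <= x by apply: powR_ge0.
have hLx : L%:R <= x by rewrite truncn_le.
have hLx2 : x < L%:R + 1 by rewrite natr1; apply: truncnS_gt.
have pi1 : pi <= 1.
  apply: ltW; apply: (lt_le_trans pilt).
  apply: (@le_trans _ _ (powR q 0)); last by rewrite powRr0.
  apply: ger_powR => //; lra.
have B1 : (L * L)%:R * pi <= powR q a.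
  have -> : powR q a = x * x * powR q (2 + eps).
    by rewrite /x -!P_mul //; congr (powR q _); lra.
  rewrite natrM; apply: ler_pM => //; [by rewrite mulr_ge0 ?ler0n | | exact: ltW].
  by apply: ler_pM; rewrite ?ler0n.
set t := powR q (- a).
have t0 : 0 <= t by apply: powR_ge0.
have ht : q * x = t.
  by rewrite -{1}(powRr1 (ltW q0)) /x -P_mul //; congr (powR q _); lra.
set Y := (1 - q) ^+ L.
have Y0 : 0 <= Y by apply: exprn_ge0; lra.
have hY : Y <= expR (- q * L%:R).
  rewrite expRM_natr; apply: lerXn2r; rewrite ?nnegrE ?expR_ge0 //; first lra.
  by have := expR_ge1Dx (- q); lra.
have hY2 : expR (- q * L%:R) <= expR (1 - t).
  rewrite ler_expR; nra.
set E := expR t.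
have E0 : 0 < E by apply: expR_gt0.
have hYE : Y * E <= e.
  have : Y <= e / E by rewrite /e /E -expRB; exact: le_trans hY hY2.
  by rewrite ler_pdivlMr.
have n0 : (0 < n%:R :> R) by apply: ltr0Sn.
have hE : t ^+ n <= E * N.
  have -> : E = expR (t / n%:R) ^+ n by rewrite /E -expRM_natr divfK ?gt_eqF.
  have -> : t ^+ n = (t / n%:R) ^+ n * N by rewrite /N -exprMn divfK ?gt_eqF.
  apply: ler_wpM2r; first exact: ltW.
  apply: lerXn2r; rewrite ?nnegrE ?expR_ge0 ?divr_ge0 ?ler0n //.
  by have := expR_ge1Dx (t / n%:R); lra.
set T := powR q (- (a * n%:R)).
have hT : t ^+ n = T.
  by rewrite /t /T -powR_mulrn ?powR_ge0 // -powRrM mulNr.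
set U := powR q (a * n%:R - 1 - a).
have hxUT : x = U * T.
  by rewrite /x /U /T -P_mul //; congr (powR q _); lra.
have hU : U <= powR q a * K.
  have -> : U = powR q a * powR q (a * n%:R - 1 - 2 * a).
    by rewrite /U -P_mul //; congr (powR q _); lra.
  apply: ler_wpM2l; first exact: Pge0.
  apply: le_trans Pa_K; apply: ger_powR => //; lra.
have U0 : 0 <= U by apply: Pge0.
have T0 : 0 <= T by apply: Pge0.
have B2 : 2 * L%:R * Y <= powR q a.
  have s1 : L%:R * Y <= U * T * Y by rewrite -hxUT; apply: ler_wpM2r.
  have s2 : U * T * Y <= U * (E * N) * Y.
    apply: ler_wpM2r => //; apply: ler_wpM2l => //; rewrite -hT //.
  have s3 : U * (E * N) * Y <= U * N * e.
    have -> : U * (E * N) * Y = U * N * (Y * E) by ring.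
    apply: ler_wpM2l => //; apply: mulr_ge0 => //; exact: ltW.
  have s4 : U * N * e <= powR q a * K * N * e.
    apply: ler_wpM2r; first exact: ltW.
    apply: ler_wpM2r; first exact: ltW.
    exact: hU.
  have s5 : powR q a * K * N * e * 2 = powR q a.
    by transitivity (powR q a * (K * (2 * e * N))); [ring | rewrite hK mulr1].
  lra.
rewrite prob_good_eq.
set Q := \sum_(eta : {ffun site L -> bool}) W q eta * (RC eta)%:R.
have hQ : 1 - 2 * L%:R * Y <= Q by apply: Q_ge; apply/andP; split; lra.
have hQ0 : 0 <= Q.
  apply: sumr_ge0 => eta _; apply: mulr_ge0; rewrite ?ler0n //.
  by apply: W_ge0; apply/andP; split; lra.
set B := (1 - pi) ^+ (L * L).
have hB : 1 - (L * L)%:R * pi <= B by apply: bern; apply/andP.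
set M := (L * L)%:R * pi.
have M0 : 0 <= M by apply: mulr_ge0; rewrite ?ler0n.
have b0 : 0 <= 2 * L%:R * Y by rewrite mulr_ge0 ?mulr_ge0 ?ler0n.
have f1 : (1 - M) * Q <= B * Q by apply: ler_wpM2r.
have f2 : (1 - M) * (1 - 2 * L%:R * Y) <= (1 - M) * Q.
  apply: ler_wpM2l => //; have B1' : M <= powR q a := B1; lra.
have f3 : 0 <= M * (2 * L%:R * Y) by apply: mulr_ge0.
have B1' : M <= powR q a := B1.
nra.
Qed.
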